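(* Let $p$ be a probability rule for unnormalised quantum many-worlds theory satisfying Axioms (A1)–(A3). Then for every allowed state $v=\sum_n v_n\lvert n\rangle$ and every $n\ge0$, $p_n(v)=\dfrac{|v_n|^2}{\sum_m|v_m|^2}$.
   Context: Unnormalised quantum many-worlds theory is defined as follows. The worlds are the vectors $\lvert n\rangle$, $n\in\{0,1,2,\dots\}$, of a countably infinite orthonormal basis of a complex Hilbert space. The allowed states are the vectors $v=\sum_n v_n\lvert n\rangle$ with $0<\sum_n|v_n|^2<\infty$, where $v_n=\langle n\vert v\rangle$ is the amplitude of world $n$. The allowed transformations are all unitary operators $T$, with matrix elements $T_{ij}=\langle i\rvert T\lvert j\rangle$. A probability rule assigns to each allowed state $v$ a sequence $(p_n(v))_{n\ge 0}$ of nonnegative reals with $\sum_n p_n(v)=1$. The axioms are: (A1) Present state dependence: $p_n$ depends only on the present state $v$, so $p$ is a function of the state alone. (A2) Weak connection with amplitudes: for every allowed state $v$, $v_n=0$ implies $p_n(v)=0$. (A3) Weak connection with transformations: for every allowed state $v$ and allowed transformation $T$, and every partition of $\{0,1,2,\dots\}$ into subsets $\mathcal S_k$ such that $T_{ij}=0$ whenever $i$ and $j$ lie in different subsets, we have $\sum_{n\in\mathcal S_k}p_n(v)=\sum_{n\in\mathcal S_k}p_n(Tv)$ for every $k$. *)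

(* Defs.v *)
From Stdlib Require Import Reals.
From Coquelicot Require Export Coquelicot.
Open Scope R_scope.

(* A vector of the Hilbert space is given by its amplitude sequence v_n = <n|v>. *)
Definition vec := nat -> C.

Definition sqn (v : vec) (n : nat) : R := (Cmod (v n)) ^ 2.

Definition l2 (v : vec) : Prop := ex_series (sqn v).

Definition allowed (v : vec) : Prop := l2 v /\ 0 < Series (sqn v).

Definition basis (j : nat) : vec := fun n => if Nat.eqb n j then 1%C else 0%C.

(* unitary operator on l^2: linear, isometric, surjective (a linear surjective
   isometry of a Hilbert space is exactly a unitary operator). Only its
   behaviour on l^2 matters. *)
Definition unitary (T : vec -> vec) : Prop :=
  (forall u, l2 u -> l2 (T u)) /\
  (forall (u w : vec) (a b : C), l2 u -> l2 w ->
     forall n, T (fun m => (a * u m + b * w m)%C) n = (a * T u n + b * T w n)%C) /\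
  (forall u, l2 u -> Series (sqn (T u)) = Series (sqn u)) /\
  (forall w, l2 w -> exists u, l2 u /\ forall n, T u n = w n).

Definition mat (T : vec -> vec) (i j : nat) : C := T (basis j) i.

(* A probability rule: p v n = p_n(v); for every allowed v, (p_n(v))_n is a
   sequence of nonnegative reals summing to 1. Axiom A1 (dependence on the
   present state only) is built into the type of p. *)
Definition prob_rule (p : vec -> nat -> R) : Prop :=
  forall v, allowed v -> (forall n, 0 <= p v n) /\ is_series (p v) 1.

Definition axiom_A2 (p : vec -> nat -> R) : Prop :=
  forall v n, allowed v -> v n = 0%C -> p v n = 0.

Definition block_sum (p : vec -> nat -> R) (v : vec) (blk : nat -> nat) (k : nat) : R :=
  Series (fun n => if Nat.eqb (blk n) k then p v n else 0).

(* A3: a partition of N (necessarily into countably many blocks) is encoded by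
   a labelling blk : nat -> nat, S_k = blk^{-1}(k). *)
Definition axiom_A3 (p : vec -> nat -> R) : Prop :=
  forall (v : vec) (T : vec -> vec) (blk : nat -> nat),
    allowed v -> unitary T ->
    (forall i j, blk i <> blk j -> mat T i j = 0%C) ->
    forall k, block_sum p v blk k = block_sum p (T v) blk k.

(* Main.v *)
Require Import Defs.
From Stdlib Require Import Reals Lra Lia FunctionalExtensionality.
From Coquelicot Require Import Coquelicot.
Open Scope R_scope.

Definition spike (k : nat) (a : R) : nat -> R := fun i => if Nat.eqb i k then a else 0.

Lemma is_series_zero : is_series (fun _ : nat => 0) 0.
Proof.
  unfold is_series. eapply filterlim_ext. 2: apply filterlim_const.
  intro n. simpl. rewrite sum_n_Reals. induction n; simpl; [reflexivity|]. rewrite <- IHn. unfold plus, zero; simpl. ring.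
Qed.

Lemma is_series_eqR (a b : nat -> R) (l l' : R) : (forall n, a n = b n) -> l = l' -> is_series a l -> is_series b l'.
Proof. intros H ->. apply is_series_ext. exact H. Qed.

Lemma is_series_spike k a : is_series (spike k a) a.
Proof.
  revert a. induction k; intro a.
  - apply is_series_decr_1.
    eapply is_series_eqR. 3: apply is_series_zero. reflexivity.
    unfold spike; simpl. unfold plus, opp; simpl. change (0 = a + - a). ring.
  - apply is_series_decr_1.
    eapply is_series_eqR. 3: apply (IHk a). reflexivity.
    unfold spike; simpl. unfold plus, opp; simpl. change (a = a + - 0). ring.
Qed.

Lemma Series_spike k a : Series (spike k a) = a.
Proof. apply is_series_unique, is_series_spike. Qed.

Lemma ex_series_spike k a : ex_series (spike k a).
Proof. exists a. apply is_series_spike. Qed.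

Lemma Series_zero : Series (fun _ => 0) = 0.
Proof. apply is_series_unique, is_series_zero. Qed.

Lemma exR_plus (a b : nat -> R) : ex_series a -> ex_series b -> ex_series (fun n => a n + b n).
Proof. intros Ha Hb. exact (ex_series_plus _ _ Ha Hb). Qed.

Lemma exR_scal (c : R) (a : nat -> R) : ex_series a -> ex_series (fun n => c * a n).
Proof. intros Ha. exact (ex_series_scal_l c _ Ha). Qed.

Lemma exR_ext (a b : nat -> R) : (forall n, a n = b n) -> ex_series a -> ex_series b.
Proof. apply ex_series_ext. Qed.

Lemma exR_le (a b : nat -> R) : (forall n, Rabs (a n) <= b n) -> ex_series b -> ex_series a.
Proof. intros H Hb. apply (ex_series_le a b); auto. Qed.

Lemma Series_nonneg (a : nat -> R) : (forall n, 0 <= a n) -> ex_series a -> 0 <= Series a.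
Proof. intros H Ha. rewrite <- Series_zero. apply Series_le; auto. intro n; split; [lra| apply H]. Qed.

Lemma term_le_Series (a : nat -> R) k : (forall n, 0 <= a n) -> ex_series a -> a k <= Series a.
Proof.
  intros H Ha.
  assert (E : Series a = Series (fun n => (a n - spike k (a k) n)) + Series (spike k (a k))).
  { rewrite <- Series_plus.
    - apply Series_ext. intro n. ring.
    - apply exR_ext with (fun n => a n + (-1) * spike k (a k) n). intro; ring.
      apply exR_plus; auto. apply exR_scal, ex_series_spike.
    - apply ex_series_spike. }
  rewrite E, Series_spike.
  assert (0 <= Series (fun n => a n - spike k (a k) n)).
  { apply Series_nonneg.
    - intro n. unfold spike. destruct (Nat.eqb_spec n k); subst; [lra| specialize (H n); lra].
    - apply exR_ext with (fun n => a n + (-1) * spike k (a k) n). intro; ring.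
      apply exR_plus; auto. apply exR_scal, ex_series_spike. }
  lra.
Qed.

Lemma ex_prod (a b : nat -> R) : ex_series (fun n => a n ^ 2) -> ex_series (fun n => b n ^ 2) ->
  ex_series (fun n => a n * b n).
Proof.
  intros Ha Hb. apply exR_le with (fun n => /2 * (a n ^2 + b n ^2)).
  - intro n. apply Rabs_le. pose proof (pow2_ge_0 (a n - b n)). pose proof (pow2_ge_0 (a n + b n)). split; nra.
  - apply exR_scal, exR_plus; auto.
Qed.

Lemma sqn_ri (x : vec) k : sqn x k = fst (x k) ^ 2 + snd (x k) ^ 2.
Proof. unfold sqn, Cmod. rewrite pow2_sqrt; [reflexivity|]. nra. Qed.

Lemma l2_re (x : vec) : l2 x -> ex_series (fun k => fst (x k) ^ 2).
Proof. intro H. apply exR_le with (sqn x); auto. intro n. rewrite sqn_ri. rewrite Rabs_pos_eq; nra. Qed.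

Lemma l2_im (x : vec) : l2 x -> ex_series (fun k => snd (x k) ^ 2).
Proof. intro H. apply exR_le with (sqn x); auto. intro n. rewrite sqn_ri. rewrite Rabs_pos_eq; nra. Qed.

Lemma l2_of (x : vec) : ex_series (fun k => fst (x k) ^ 2) -> ex_series (fun k => snd (x k) ^ 2) -> l2 x.
Proof. intros H1 H2. unfold l2. apply exR_ext with (fun k => fst (x k) ^ 2 + snd (x k) ^ 2).
  intro; rewrite sqn_ri; reflexivity. apply exR_plus; auto. Qed.

Lemma sqn_nonneg x k : 0 <= sqn x k.
Proof. rewrite sqn_ri. nra. Qed.

Lemma bs_single (p : vec -> nat -> R) v k : block_sum p v (fun i => i) k = p v k.
Proof.
  unfold block_sum. rewrite <- (Series_spike k (p v k)). apply Series_ext. intro n.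
  unfold spike. destruct (Nat.eqb_spec n k); subst; reflexivity.
Qed.

Lemma A3_singletons p (HA3 : axiom_A3 p) v T : allowed v -> unitary T ->
  (forall i j, i <> j -> mat T i j = 0%C) -> forall k, p v k = p (T v) k.
Proof.
  intros Hv HT Hm k. rewrite <- !bs_single. apply HA3; auto.
Qed.

Lemma bs_one (p : vec -> nat -> R) v n : block_sum p v (fun i => if Nat.eqb i n then 0%nat else 1%nat) 0%nat = p v n.
Proof.
  unfold block_sum. rewrite <- (Series_spike n (p v n)). apply Series_ext. intro k.
  unfold spike. destruct (Nat.eqb_spec k n); subst; reflexivity.
Qed.

Lemma A3_one p (HA3 : axiom_A3 p) v T n : allowed v -> unitary T ->
  (forall i j, i <> j -> (i = n \/ j = n) -> mat T i j = 0%C) -> p v n = p (T v) n.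
Proof.
  intros Hv HT Hm. rewrite <- !bs_one. apply HA3; auto.
  intros i j Hij. apply Hm.
  - intro; subst; apply Hij; reflexivity.
  - destruct (Nat.eqb_spec i n); destruct (Nat.eqb_spec j n); auto. exfalso; auto.
Qed.

Definition blk2 (i j : nat) : nat -> nat := fun a => if Nat.eqb a j then i else a.

Lemma bs_pair (p : vec -> nat -> R) v i j : i <> j -> block_sum p v (blk2 i j) i = p v i + p v j.
Proof.
  intro Hij. unfold block_sum.
  rewrite <- (Series_spike i (p v i)), <- (Series_spike j (p v j)).
  rewrite <- Series_plus by apply ex_series_spike.
  apply Series_ext. intro k. unfold spike, blk2.
  destruct (Nat.eqb_spec k j); destruct (Nat.eqb_spec k i); subst;
    rewrite ?Nat.eqb_refl; try (exfalso; auto; fail); try ring.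
Qed.

Lemma A3_pair p (HA3 : axiom_A3 p) v T i j : i <> j -> allowed v -> unitary T ->
  (forall a b, blk2 i j a <> blk2 i j b -> mat T a b = 0%C) ->
  p v i + p v j = p (T v) i + p (T v) j.
Proof.
  intros Hij Hv HT Hm. rewrite <- !bs_pair by auto. apply HA3; auto.
Qed.

Definition Dph (ph : nat -> C) (x : vec) : vec := fun k => (ph k * x k)%C.

Lemma sqn_Dph ph x : (forall k, Cmod (ph k) = 1) -> sqn (Dph ph x) = sqn x.
Proof. intro H. apply functional_extensionality. intro k. unfold sqn, Dph. rewrite Cmod_mult, H. ring. Qed.

Lemma Dph_unitary ph : (forall k, Cmod (ph k) = 1) -> unitary (Dph ph).
Proof.
  intro H. repeat split.
  - intros u Hu. unfold l2. rewrite sqn_Dph; auto.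
  - intros u w a b _ _ n. unfold Dph. ring.
  - intros u _. rewrite sqn_Dph; auto.
  - intros w Hw. exists (fun k => (Cconj (ph k) * w k)%C). split.
    + unfold l2. apply exR_ext with (sqn w); auto. intro k. unfold sqn. rewrite Cmod_mult, Cmod_conj, H. ring.
    + intro n. unfold Dph. rewrite Cmult_assoc, <- Cmod2_conj, H, pow1. apply Cmult_1_l.
Qed.

Lemma Dph_mat ph i j : i <> j -> mat (Dph ph) i j = 0%C.
Proof. intro H. unfold mat, Dph, basis. destruct (Nat.eqb_spec i j); [contradiction|]. ring. Qed.

Definition absv (v : vec) : vec := fun k => RtoC (Cmod (v k)).

Lemma allowed_absv v : allowed v -> allowed (absv v).
Proof.
  assert (E : sqn (absv v) = sqn v).
  { apply functional_extensionality; intro k. unfold sqn, absv. rewrite Cmod_R, Rabs_pos_eq; auto. apply Cmod_ge_0. }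
  unfold allowed, l2. rewrite E. auto.
Qed.

Lemma phase_lemma p (HA3 : axiom_A3 p) v : allowed v -> forall k, p v k = p (absv v) k.
Proof.
  intros Hv.
  set (ph := fun k => match Req_EM_T (Cmod (v k)) 0 with
                      | left _ => RtoC 1
                      | right _ => (fst (v k) / Cmod (v k), - snd (v k) / Cmod (v k)) end).
  assert (Hph : forall k, Cmod (ph k) = 1).
  { intro k. unfold ph. destruct (Req_EM_T (Cmod (v k)) 0) as [e|e].
    - rewrite Cmod_R. apply Rabs_R1.
    - unfold Cmod at 1. rewrite <- sqrt_1. f_equal. simpl.
      pose proof (sqn_ri v k) as Hs. unfold sqn in Hs.
      transitivity ((fst (v k) ^ 2 + snd (v k) ^ 2) / Cmod (v k) ^ 2). field. auto.
      rewrite <- Hs. field. auto. }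
  assert (Hd : Dph ph v = absv v).
  { apply functional_extensionality; intro k. unfold Dph, absv, ph.
    destruct (Req_EM_T (Cmod (v k)) 0) as [e|e].
    - rewrite e. rewrite (Cmod_eq_0 _ e). ring.
    - pose proof (sqn_ri v k) as Hs. unfold sqn in Hs.
      unfold Cmult, RtoC. simpl. f_equal.
      + transitivity ((fst (v k) ^ 2 + snd (v k) ^ 2) / Cmod (v k)). field. auto. rewrite <- Hs. field. auto.
      + field; auto. }
  intro k. rewrite <- Hd. apply A3_singletons; auto.
  - apply Dph_unitary; auto.
  - intros; apply Dph_mat; auto.
Qed.

Lemma sq_le a b : (a - b) ^ 2 <= 2 * a ^ 2 + 2 * b ^ 2.
Proof. pose proof (pow2_ge_0 (a + b)). nra. Qed.

Section HH.
Variable u : nat -> R.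
Hypothesis Hu : ex_series (fun k => u k ^ 2).
Let U := Series (fun k => u k ^ 2).
Hypothesis HU : U <> 0.

Definition Sr (x : vec) := Series (fun k => u k * fst (x k)).
Definition Si (x : vec) := Series (fun k => u k * snd (x k)).
Definition hh (x : vec) : vec :=
  fun k => (fst (x k) - 2 / U * Sr x * u k, snd (x k) - 2 / U * Si x * u k).

Lemma ex_ur x : l2 x -> ex_series (fun k => u k * fst (x k)).
Proof. intro H. apply ex_prod; auto. apply l2_re; auto. Qed.
Lemma ex_ui x : l2 x -> ex_series (fun k => u k * snd (x k)).
Proof. intro H. apply ex_prod; auto. apply l2_im; auto. Qed.

Lemma hh_l2 x : l2 x -> l2 (hh x).
Proof.
  intro H. pose proof (l2_re x H). pose proof (l2_im x H).
  apply l2_of; unfold hh; cbn [fst snd].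
  - apply exR_le with (fun k => 2 * fst (x k) ^ 2 + 2 * (2 / U * Sr x) ^ 2 * u k ^ 2).
    + intro k. rewrite Rabs_pos_eq by apply pow2_ge_0. eapply Rle_trans; [apply sq_le|]. right. ring.
    + apply exR_plus; apply exR_scal; auto.
  - apply exR_le with (fun k => 2 * snd (x k) ^ 2 + 2 * (2 / U * Si x) ^ 2 * u k ^ 2).
    + intro k. rewrite Rabs_pos_eq by apply pow2_ge_0. eapply Rle_trans; [apply sq_le|]. right. ring.
    + apply exR_plus; apply exR_scal; auto.
Qed.

Lemma Sr_lin (x y : vec) (a b : C) : l2 x -> l2 y ->
  Sr (fun m => (a * x m + b * y m)%C) =
  fst a * Sr x - snd a * Si x + (fst b * Sr y - snd b * Si y).
Proof.
  intros Hx Hy. unfold Sr, Si.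
  rewrite <- !Series_scal_l.
  rewrite <- !Series_minus, <- Series_plus.
  - apply Series_ext. intro k. simpl. ring.
  - apply exR_ext with (fun k => fst a * (u k * fst (x k)) + (-1) * (snd a * (u k * snd (x k)))).
    intro; ring. apply exR_plus; repeat apply exR_scal; [apply ex_ur|apply ex_ui]; auto.
  - apply exR_ext with (fun k => fst b * (u k * fst (y k)) + (-1) * (snd b * (u k * snd (y k)))).
    intro; ring. apply exR_plus; repeat apply exR_scal; [apply ex_ur|apply ex_ui]; auto.
  - apply exR_scal; apply ex_ur; auto.
  - apply exR_scal; apply ex_ui; auto.
  - apply exR_scal; apply ex_ur; auto.
  - apply exR_scal; apply ex_ui; auto.
Qed.

Lemma Si_lin (x y : vec) (a b : C) : l2 x -> l2 y ->
  Si (fun m => (a * x m + b * y m)%C) =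
  fst a * Si x + snd a * Sr x + (fst b * Si y + snd b * Sr y).
Proof.
  intros Hx Hy. unfold Sr, Si.
  rewrite <- !Series_scal_l.
  rewrite <- !Series_plus.
  - apply Series_ext. intro k. simpl. ring.
  - apply exR_plus; repeat apply exR_scal; [apply ex_ui|apply ex_ur]; auto.
  - apply exR_plus; repeat apply exR_scal; [apply ex_ui|apply ex_ur]; auto.
  - apply exR_scal; apply ex_ui; auto.
  - apply exR_scal; apply ex_ur; auto.
  - apply exR_scal; apply ex_ui; auto.
  - apply exR_scal; apply ex_ur; auto.
Qed.

Lemma hh_norm x : l2 x -> Series (sqn (hh x)) = Series (sqn x).
Proof.
  intro H. pose proof (ex_ur x H). pose proof (ex_ui x H).
  set (cr := 2 / U * Sr x). set (ci := 2 / U * Si x).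
  transitivity (Series (fun k => (sqn x k + (-2 * cr) * (u k * fst (x k))) + ((-2 * ci) * (u k * snd (x k)) + (cr ^ 2 + ci ^ 2) * u k ^ 2))).
  { apply Series_ext. intro k. rewrite !sqn_ri. unfold hh; simpl. fold cr ci. ring. }
  rewrite Series_plus, !Series_plus, !Series_scal_l.
  - fold (Sr x) (Si x) U. unfold cr, ci. field. auto.
  - apply exR_scal; auto.
  - apply exR_scal; auto.
  - exact H.
  - apply exR_scal; auto.
  - apply exR_plus; auto; apply exR_scal; auto.
  - apply exR_plus; apply exR_scal; auto.
Qed.

Lemma Sr_hh x : l2 x -> Sr (hh x) = Sr x - 2 / U * Sr x * U.
Proof.
  intro H. unfold Sr at 1. unfold hh; simpl.
  transitivity (Series (fun k => u k * fst (x k) + (- (2 / U * Sr x)) * u k ^ 2)).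
  { apply Series_ext. intro k. ring. }
  rewrite Series_plus, Series_scal_l. fold (Sr x) U. ring.
  apply ex_ur; auto. apply exR_scal; auto.
Qed.

Lemma Si_hh x : l2 x -> Si (hh x) = Si x - 2 / U * Si x * U.
Proof.
  intro H. unfold Si at 1. unfold hh; simpl.
  transitivity (Series (fun k => u k * snd (x k) + (- (2 / U * Si x)) * u k ^ 2)).
  { apply Series_ext. intro k. ring. }
  rewrite Series_plus, Series_scal_l. fold (Si x) U. ring.
  apply ex_ui; auto. apply exR_scal; auto.
Qed.

Lemma hh_invol x : l2 x -> forall k, hh (hh x) k = x k.
Proof.
  intros H k. pose proof (Sr_hh x H). pose proof (Si_hh x H).
  unfold hh at 1. rewrite H0, H1. unfold hh; simpl.
  apply injective_projections; simpl; field; auto.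
Qed.

Lemma hh_unitary : unitary hh.
Proof.
  repeat split.
  - apply hh_l2.
  - intros x y a b Hx Hy n. unfold hh. rewrite (Sr_lin x y a b Hx Hy), (Si_lin x y a b Hx Hy).
    apply injective_projections; simpl; ring.
  - apply hh_norm.
  - intros w Hw. exists (hh w). split. apply hh_l2; auto. apply hh_invol; auto.
Qed.

Lemma hh_mat n : u n = 0 -> forall i j, i <> j -> (i = n \/ j = n) -> mat hh i j = 0%C.
Proof.
  intros Hn i j Hij Hor. unfold mat, hh.
  assert (E1 : Sr (basis j) = u j).
  { unfold Sr. rewrite <- (Series_spike j (u j)). apply Series_ext. intro k. unfold basis, spike.
    destruct (Nat.eqb_spec k j); subst; simpl; ring. }
  assert (E2 : Si (basis j) = 0).
  { unfold Si. rewrite <- Series_zero. apply Series_ext. intro k. unfold basis.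
    destruct (Nat.eqb_spec k j); simpl; ring. }
  rewrite E1, E2. unfold basis. destruct (Nat.eqb_spec i j); [contradiction|].
  destruct Hor; subst; rewrite Hn; apply injective_projections; simpl; ring.
Qed.

End HH.

Definition two (n m : nat) (a b : R) : vec :=
  fun k => if Nat.eqb k n then RtoC a else if Nat.eqb k m then RtoC b else 0%C.

Lemma reduction p (HA3 : axiom_A3 p) v n m : allowed v -> m <> n ->
  p v n = p (two n m (Cmod (v n)) (sqrt (Series (sqn v) - Cmod (v n) ^ 2))) n.
Proof.
  intros Hv Hmn.
  rewrite (phase_lemma p HA3 v Hv n).
  set (y := absv v).
  set (r := fun k => Cmod (v k)).
  set (w := fun k => if Nat.eqb k n then 0 else r k).
  assert (Hr2 : forall k, r k ^ 2 = sqn v k) by reflexivity.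
  assert (Hexr : ex_series (fun k => r k ^ 2)). { apply exR_ext with (sqn v). intro; auto. apply Hv. }
  assert (Hw2 : forall k, w k ^ 2 = r k ^ 2 + (-1) * spike n (r n ^ 2) k).
  { intro k. unfold w, spike. destruct (Nat.eqb_spec k n); subst; ring. }
  assert (Hexw : ex_series (fun k => w k ^ 2)).
  { apply exR_ext with (fun k => r k ^ 2 + (-1) * spike n (r n ^ 2) k). intro; auto.
    apply exR_plus; auto. apply exR_scal, ex_series_spike. }
  set (Sw := Series (fun k => w k ^ 2)).
  assert (HSw : Sw = Series (sqn v) - Cmod (v n) ^ 2).
  { unfold Sw. rewrite (Series_ext _ _ Hw2), Series_plus, Series_scal_l, Series_spike.
    rewrite (Series_ext _ _ Hr2). unfold r. ring. auto. apply exR_scal, ex_series_spike. }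
  rewrite <- HSw.
  assert (HSw0 : 0 <= Sw). { apply Series_nonneg; auto. intro; apply pow2_ge_0. }
  set (W := sqrt Sw).
  assert (HW2 : W ^ 2 = Sw) by (apply pow2_sqrt; auto).
  set (u := fun k => w k - spike m W k).
  assert (Hu2 : forall k, u k ^ 2 = w k ^ 2 + spike m ((w m - W) ^ 2 - w m ^ 2) k).
  { intro k. unfold u, spike. destruct (Nat.eqb_spec k m); subst; ring. }
  assert (Hexu : ex_series (fun k => u k ^ 2)).
  { apply exR_ext with (fun k => w k ^ 2 + spike m ((w m - W) ^ 2 - w m ^ 2) k). intro; auto.
    apply exR_plus; auto. apply ex_series_spike. }
  assert (HU : Series (fun k => u k ^ 2) = 2 * Sw - 2 * W * w m).
  { rewrite (Series_ext _ _ Hu2), Series_plus, Series_spike. fold Sw. rewrite <- HW2. ring.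
    auto. apply ex_series_spike. }
  assert (Hun : u n = 0).
  { unfold u, w, spike. rewrite Nat.eqb_refl. destruct (Nat.eqb_spec n m); [subst; contradiction|]. ring. }
  assert (Hwn : w n = 0). { unfold w. rewrite Nat.eqb_refl. reflexivity. }
  assert (Hy : allowed y) by (apply allowed_absv; auto).
  destruct (Req_EM_T (Series (fun k => u k ^ 2)) 0) as [H0|H0].
  - (* already in target form *)
    assert (Hu0 : forall k, u k = 0).
    { intro k. assert (u k ^ 2 <= 0).
      { rewrite <- H0. apply (term_le_Series (fun k => u k ^ 2) k); auto. intro; apply pow2_ge_0. }
      pose proof (pow2_ge_0 (u k)). assert (u k ^ 2 = 0) by lra.
      nra. }
    replace y with (two n m (Cmod (v n)) W). reflexivity.
    apply functional_extensionality. intro k. unfold two, y, absv.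
    destruct (Nat.eqb_spec k n); [subst; reflexivity|].
    specialize (Hu0 k). unfold u, w, spike in Hu0.
    destruct (Nat.eqb_spec k n); [contradiction|].
    destruct (Nat.eqb_spec k m); unfold r in Hu0; f_equal; lra.
  - rewrite (A3_one p HA3 y (hh u) n Hy (hh_unitary u Hexu H0) (hh_mat u n Hun)).
    replace (hh u y) with (two n m (Cmod (v n)) W). reflexivity.
    assert (HSr : Sr u y = Sw - W * w m).
    { unfold Sr. transitivity (Series (fun k => w k ^ 2 + (-1) * spike m (W * w m) k)).
      - apply Series_ext. intro k. unfold y, absv, u, w, spike; simpl.
        destruct (Nat.eqb_spec k n); destruct (Nat.eqb_spec k m); subst; try contradiction;
          rewrite ?Nat.eqb_refl; unfold r; try ring.
        destruct (Nat.eqb_spec m n); [contradiction|]. ring.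
      - rewrite Series_plus, Series_scal_l, Series_spike. fold Sw. ring.
        auto. apply exR_scal, ex_series_spike. }
    assert (HSi : Si u y = 0).
    { unfold Si. rewrite <- Series_zero. apply Series_ext. intro k. unfold y, absv; simpl. ring. }
    assert (Hc : 2 / Series (fun k => u k ^ 2) * Sr u y = 1).
    { rewrite HSr. rewrite HU in H0 |- *. field. intro; apply H0. lra. }
    apply functional_extensionality. intro k. unfold hh. rewrite Hc, HSi.
    unfold two, y, absv. 
    destruct (Nat.eqb_spec k n).
    + subst. rewrite Hun. apply injective_projections; simpl; ring.
    + unfold u, w, spike. destruct (Nat.eqb_spec k n); [contradiction|].
      destruct (Nat.eqb_spec k m); apply injective_projections; simpl; unfold r; ring.
Qed.

Definition three (a b c : nat) (x y z : R) : vec :=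
  fun k => if Nat.eqb k a then RtoC x else if Nat.eqb k b then RtoC y
           else if Nat.eqb k c then RtoC z else 0%C.

Lemma sqn_RtoC x : Cmod (RtoC x) ^ 2 = x ^ 2.
Proof. rewrite Cmod_R. apply pow2_abs. Qed.

Lemma sqn_three a b c x y z : a <> b -> a <> c -> b <> c ->
  forall k, sqn (three a b c x y z) k = spike a (x ^ 2) k + spike b (y ^ 2) k + spike c (z ^ 2) k.
Proof.
  intros Hab Hac Hbc k. unfold sqn, three, spike.
  destruct (Nat.eqb_spec k a); destruct (Nat.eqb_spec k b); destruct (Nat.eqb_spec k c); subst;
    try contradiction; rewrite ?sqn_RtoC, ?Cmod_0; ring.
Qed.

Lemma norm_three a b c x y z : a <> b -> a <> c -> b <> c ->
  l2 (three a b c x y z) /\ Series (sqn (three a b c x y z)) = x ^ 2 + y ^ 2 + z ^ 2.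
Proof.
  intros Hab Hac Hbc. pose proof (sqn_three a b c x y z Hab Hac Hbc) as E. split.
  - unfold l2. apply exR_ext with (fun k => spike a (x ^ 2) k + spike b (y ^ 2) k + spike c (z ^ 2) k).
    intro; auto. repeat apply exR_plus; apply ex_series_spike.
  - rewrite (Series_ext _ _ E), !Series_plus, !Series_spike; auto; try apply ex_series_spike.
    apply exR_plus; apply ex_series_spike.
Qed.

Lemma allowed_three a b c x y z : a <> b -> a <> c -> b <> c -> 0 < x ^ 2 + y ^ 2 + z ^ 2 ->
  allowed (three a b c x y z).
Proof. intros. destruct (norm_three a b c x y z) as [N1 N2]; auto. split; auto. rewrite N2; auto. Qed.

Lemma two_three n m c x y : n <> m -> c <> n -> c <> m -> two n m x y = three n m c x y 0.
Proof.
  intros. apply functional_extensionality. intro k. unfold two, three.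
  destruct (Nat.eqb_spec k n); destruct (Nat.eqb_spec k m); destruct (Nat.eqb_spec k c); subst;
    try contradiction; reflexivity.
Qed.

Lemma norm_two n m x y : n <> m -> l2 (two n m x y) /\ Series (sqn (two n m x y)) = x ^ 2 + y ^ 2.
Proof.
  intros H. rewrite (two_three n m (n + m + 1)) by lia.
  destruct (norm_three n m (n + m + 1) x y 0) as [H1 H2]; try lia. split; auto. rewrite H2. ring.
Qed.

Definition rot (i j : nat) (al be : R) (x : vec) : vec :=
  fun k => if Nat.eqb k i then (RtoC al * x i + RtoC be * x j)%C
           else if Nat.eqb k j then (RtoC (- be) * x i + RtoC al * x j)%C else x k.

Lemma rot_i i j al be x : rot i j al be x i = (RtoC al * x i + RtoC be * x j)%C.
Proof. unfold rot. rewrite Nat.eqb_refl. reflexivity. Qed.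
Lemma rot_j i j al be x : i <> j -> rot i j al be x j = (RtoC (- be) * x i + RtoC al * x j)%C.
Proof. intro H. unfold rot. destruct (Nat.eqb_spec j i); [subst; contradiction|]. rewrite Nat.eqb_refl. reflexivity. Qed.
Lemma rot_k i j al be x k : k <> i -> k <> j -> rot i j al be x k = x k.
Proof. intros H1 H2. unfold rot. destruct (Nat.eqb_spec k i); [contradiction|]. destruct (Nat.eqb_spec k j); [contradiction|]. reflexivity. Qed.

Section Rot.
Variables (i j : nat) (al be : R).
Hypothesis Hij : i <> j.
Hypothesis Hab : al ^ 2 + be ^ 2 = 1.

Lemma rot_sqn_dec x : forall k, sqn (rot i j al be x) k =
  sqn x k + spike i (sqn (rot i j al be x) i - sqn x i) k + spike j (sqn (rot i j al be x) j - sqn x j) k.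
Proof.
  intro k. unfold spike. destruct (Nat.eqb_spec k i); destruct (Nat.eqb_spec k j); subst;
    try contradiction; try ring. unfold sqn at 1. rewrite rot_k; auto. unfold sqn; ring.
Qed.

Lemma rot_pair x : sqn (rot i j al be x) i + sqn (rot i j al be x) j = sqn x i + sqn x j.
Proof.
  transitivity ((al ^ 2 + be ^ 2) * (sqn x i + sqn x j)); [|rewrite Hab; ring].
  rewrite !sqn_ri, rot_i, rot_j by auto. simpl. ring.
Qed.

Lemma rot_l2 x : l2 x -> l2 (rot i j al be x).
Proof.
  intro H. unfold l2. eapply exR_ext. intro k; symmetry; apply rot_sqn_dec.
  repeat apply exR_plus; auto; apply ex_series_spike.
Qed.

Lemma rot_norm x : l2 x -> Series (sqn (rot i j al be x)) = Series (sqn x).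
Proof.
  intro H. rewrite (Series_ext _ _ (rot_sqn_dec x)), !Series_plus, !Series_spike.
  - pose proof (rot_pair x). lra.
  - exact H.
  - apply ex_series_spike.
  - apply exR_plus; auto; apply ex_series_spike.
  - apply ex_series_spike.
Qed.

Lemma rot_inv w : forall k, rot i j al be (rot i j al (- be) w) k = w k.
Proof.
  intro k. unfold rot at 1. rewrite rot_i, rot_j by auto.
  destruct (Nat.eqb_spec k i); [|destruct (Nat.eqb_spec k j)]; subst.
  - apply injective_projections; simpl; [transitivity ((al^2+be^2) * fst (w i)) | transitivity ((al^2+be^2) * snd (w i))];
      try ring; rewrite Hab; ring.
  - apply injective_projections; simpl; [transitivity ((al^2+be^2) * fst (w j)) | transitivity ((al^2+be^2) * snd (w j))];
      try ring; rewrite Hab; ring.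
  - apply rot_k; auto.
Qed.

End Rot.

Lemma rot_unitary i j al be : i <> j -> al ^ 2 + be ^ 2 = 1 -> unitary (rot i j al be).
Proof.
  intros Hij Hab. repeat split.
  - apply rot_l2; auto.
  - intros x y a b _ _ n. unfold rot.
    destruct (Nat.eqb_spec n i); [|destruct (Nat.eqb_spec n j)]; ring.
  - apply rot_norm; auto.
  - intros w Hw. exists (rot i j al (- be) w). split.
    + apply rot_l2; auto.
    + apply rot_inv; auto.
Qed.

Lemma rot_mat i j al be : i <> j -> forall a b, blk2 i j a <> blk2 i j b -> mat (rot i j al be) a b = 0%C.
Proof.
  intros Hij a b H. unfold blk2 in H. unfold mat, rot, basis.
  destruct (Nat.eqb_spec a i); destruct (Nat.eqb_spec a j); destruct (Nat.eqb_spec b j);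
  destruct (Nat.eqb_spec i b); destruct (Nat.eqb_spec j b); destruct (Nat.eqb_spec a b);
  try (exfalso; lia); try ring.
Qed.

Lemma rot_three i j c al be x y z : i <> j -> i <> c -> j <> c ->
  rot i j al be (three i j c x y z) = three i j c (al * x + be * y) (- be * x + al * y) z.
Proof.
  intros H1 H2 H3. apply functional_extensionality. intro k. unfold rot, three.
  rewrite Nat.eqb_refl. destruct (Nat.eqb_spec j i); [lia|]. rewrite Nat.eqb_refl.
  destruct (Nat.eqb_spec k i); [|destruct (Nat.eqb_spec k j)];
    try (apply injective_projections; simpl; ring); try reflexivity.
Qed.

Section Main.
Variable p : vec -> nat -> R.
Hypothesis HP : prob_rule p.
Hypothesis HA2 : axiom_A2 p.
Hypothesis HA3 : axiom_A3 p.

Definition G (n : nat) (N a : R) : R := p (two n (S n) (sqrt a) (sqrt (N - a))) n.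

Lemma red' v n : allowed v -> p v n = G n (Series (sqn v)) (Cmod (v n) ^ 2).
Proof.
  intro Hv. unfold G. rewrite sqrt_pow2 by apply Cmod_ge_0. apply reduction; auto.
Qed.

Lemma p_three a b c x y z : a <> b -> a <> c -> b <> c -> 0 < x ^ 2 + y ^ 2 + z ^ 2 ->
  p (three a b c x y z) a = G a (x ^ 2 + y ^ 2 + z ^ 2) (x ^ 2).
Proof.
  intros. rewrite red' by (apply allowed_three; auto).
  destruct (norm_three a b c x y z) as [_ E]; auto. rewrite E.
  unfold three. rewrite Nat.eqb_refl, sqn_RtoC. reflexivity.
Qed.

Lemma p_three_b a b c x y z : a <> b -> a <> c -> b <> c -> 0 < x ^ 2 + y ^ 2 + z ^ 2 ->
  p (three a b c x y z) b = G b (x ^ 2 + y ^ 2 + z ^ 2) (y ^ 2).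
Proof.
  intros. rewrite red' by (apply allowed_three; auto).
  destruct (norm_three a b c x y z) as [_ E]; auto. rewrite E.
  unfold three. destruct (Nat.eqb_spec b a); [lia|]. rewrite Nat.eqb_refl, sqn_RtoC. reflexivity.
Qed.

Lemma p_three_a0 a b c y z : a <> b -> a <> c -> b <> c -> 0 < 0 ^ 2 + y ^ 2 + z ^ 2 ->
  p (three a b c 0 y z) a = 0.
Proof.
  intros. apply HA2. apply allowed_three; auto. unfold three. rewrite Nat.eqb_refl. reflexivity.
Qed.

Lemma p_three_b0 a b c x z : a <> b -> a <> c -> b <> c -> 0 < x ^ 2 + 0 ^ 2 + z ^ 2 ->
  p (three a b c x 0 z) b = 0.
Proof.
  intros. apply HA2. apply allowed_three; auto. unfold three.
  destruct (Nat.eqb_spec b a); [lia|]. rewrite Nat.eqb_refl. reflexivity.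
Qed.

Lemma allowed_two_G n N a : 0 < N -> 0 <= a <= N -> allowed (two n (S n) (sqrt a) (sqrt (N - a))).
Proof.
  intros HN Ha. destruct (norm_two n (S n) (sqrt a) (sqrt (N - a))) as [H1 H2]; [lia|].
  split; auto. rewrite H2, !pow2_sqrt by lra. lra.
Qed.

Lemma G_nonneg n N a : 0 < N -> 0 <= a <= N -> 0 <= G n N a.
Proof. intros. unfold G. apply (HP _ (allowed_two_G n N a H H0)). Qed.

Lemma G_zero n N : 0 < N -> G n N 0 = 0.
Proof.
  intros. unfold G. apply HA2. apply allowed_two_G; lra.
  unfold two. rewrite Nat.eqb_refl, sqrt_0. reflexivity.
Qed.

Lemma G_full n N : 0 < N -> G n N N = 1.
Proof.
  intros HN. unfold G. set (x := two n (S n) (sqrt N) (sqrt (N - N))).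
  assert (Hx : allowed x) by (apply allowed_two_G; lra).
  destruct (HP x Hx) as [_ Hs].
  assert (E : forall k, p x k = spike n (p x n) k).
  { intro k. unfold spike. destruct (Nat.eqb_spec k n); [subst; reflexivity|].
    apply HA2; auto. unfold x, two. destruct (Nat.eqb_spec k n); [contradiction|].
    destruct (Nat.eqb_spec k (S n)). replace (N - N) with 0 by ring. rewrite sqrt_0. reflexivity. reflexivity. }
  apply is_series_unique in Hs. rewrite (Series_ext _ _ E), Series_spike in Hs. exact Hs.
Qed.

Lemma G_sym k j N s : 0 < N -> 0 <= s <= N -> k <> j -> G k N s = G j N s.
Proof.
  intros HN Hs Hkj. set (c := (k + j + 1)%nat).
  assert (Hkc : k <> c) by lia. assert (Hjc : j <> c) by lia.
  set (x := three k j c (sqrt s) 0 (sqrt (N - s))).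
  assert (HNx : sqrt s ^ 2 + 0 ^ 2 + sqrt (N - s) ^ 2 = N) by (rewrite !pow2_sqrt by lra; ring).
  assert (Hx : allowed x) by (apply allowed_three; auto; rewrite HNx; lra).
  pose proof (A3_pair p HA3 x (rot k j 0 1) k j Hkj Hx (rot_unitary k j 0 1 Hkj ltac:(ring)) (rot_mat k j 0 1 Hkj)) as E.
  unfold x in E. rewrite rot_three in E by auto.
  replace (0 * sqrt s + 1 * 0) with 0 in E by ring.
  replace (- (1) * sqrt s + 0 * 0) with (- sqrt s) in E by ring.
  assert (HNy : 0 ^ 2 + (- sqrt s) ^ 2 + sqrt (N - s) ^ 2 = N).
  { replace ((- sqrt s) ^ 2) with (sqrt s ^ 2) by ring. lra. }
  rewrite (p_three k j c), (p_three_b0 k j c), (p_three_a0 k j c), (p_three_b k j c) in E; auto;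
    try (rewrite HNx; lra); try (rewrite HNy; lra).
  rewrite HNx, HNy in E. replace ((- sqrt s) ^ 2) with (sqrt s ^ 2) in E by ring.
  rewrite pow2_sqrt in E by lra. lra.
Qed.

Lemma G_add k j N a b : 0 < N -> 0 <= a -> 0 <= b -> a + b <= N -> k <> j ->
  G k N a + G j N b = G k N (a + b).
Proof.
  intros HN Ha Hb Hab Hkj.
  destruct (Req_EM_T (a + b) 0) as [H0|H0].
  { assert (a = 0) by lra. assert (b = 0) by lra. subst. rewrite Rplus_0_r, !G_zero; auto; ring. }
  set (c := (k + j + 1)%nat).
  assert (Hkc : k <> c) by lia. assert (Hjc : j <> c) by lia.
  set (x := three k j c (sqrt a) (sqrt b) (sqrt (N - a - b))).
  assert (HNx : sqrt a ^ 2 + sqrt b ^ 2 + sqrt (N - a - b) ^ 2 = N) by (rewrite !pow2_sqrt by lra; ring).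
  assert (Hx : allowed x) by (apply allowed_three; auto; rewrite HNx; lra).
  assert (Hs : 0 < sqrt (a + b)) by (apply sqrt_lt_R0; lra).
  set (al := sqrt a / sqrt (a + b)). set (be := sqrt b / sqrt (a + b)).
  assert (Hab1 : al ^ 2 + be ^ 2 = 1).
  { unfold al, be. transitivity ((sqrt a ^ 2 + sqrt b ^ 2) / sqrt (a + b) ^ 2). field. lra.
    rewrite !pow2_sqrt by lra. field. auto. }
  pose proof (A3_pair p HA3 x (rot k j al be) k j Hkj Hx (rot_unitary k j al be Hkj Hab1) (rot_mat k j al be Hkj)) as E.
  unfold x in E. rewrite rot_three in E by auto.
  replace (al * sqrt a + be * sqrt b) with (sqrt (a + b)) in E.
  2:{ unfold al, be. transitivity ((sqrt a ^ 2 + sqrt b ^ 2) / sqrt (a + b)). 2: field; lra.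
      rewrite !pow2_sqrt by lra. apply (Rmult_eq_reg_r (sqrt (a + b))); [| lra]. unfold Rdiv. rewrite Rmult_assoc, Rinv_l, Rmult_1_r by lra. rewrite sqrt_sqrt; lra. }
  replace (- be * sqrt a + al * sqrt b) with 0 in E by (unfold al, be; field; lra).
  assert (HNy : sqrt (a + b) ^ 2 + 0 ^ 2 + sqrt (N - a - b) ^ 2 = N) by (rewrite !pow2_sqrt by lra; ring).
  rewrite p_three, p_three_b, p_three, p_three_b0 in E; auto; try (rewrite HNx; lra); try (rewrite HNy; lra).
  rewrite HNx, HNy in E. rewrite (pow2_sqrt a), (pow2_sqrt b), (pow2_sqrt (a + b)) in E by lra. lra.
Qed.

End Main.

Lemma cauchy (h : R -> R) (N : R) : 0 < N -> (forall a, 0 <= a <= N -> 0 <= h a) -> h N = 1 ->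
  (forall a b, 0 <= a -> 0 <= b -> a + b <= N -> h (a + b) = h a + h b) ->
  forall a, 0 <= a <= N -> h a = a / N.
Proof.
  intros HN Hpos H1 Hadd.
  assert (h0 : h 0 = 0).
  { pose proof (Hadd 0 0 (Rle_refl 0) (Rle_refl 0) ltac:(lra)) as H. rewrite Rplus_0_r in H. lra. }
  assert (mono : forall a b, 0 <= a -> a <= b -> b <= N -> h a <= h b).
  { intros a b Ha Hab HbN. replace b with (a + (b - a)) by ring. rewrite Hadd by lra.
    pose proof (Hpos (b - a) ltac:(lra)). lra. }
  assert (mult : forall q : nat, (1 <= q)%nat -> forall k : nat, (k <= q)%nat ->
            h (INR k * (N / INR q)) = INR k * h (N / INR q)).
  { intros q Hq. assert (Hq' : 0 < INR q) by (apply lt_0_INR; lia).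
    assert (Hd : 0 < N / INR q) by (apply Rdiv_lt_0_compat; auto).
    induction k; intro Hk.
    - simpl. rewrite Rmult_0_l, h0. ring.
    - assert (Hk' : INR k + 1 <= INR q) by (rewrite <- S_INR; apply le_INR; auto).
      pose proof (pos_INR k).
      rewrite S_INR. replace ((INR k + 1) * (N / INR q)) with (INR k * (N / INR q) + N / INR q) by ring.
      rewrite Hadd, IHk.
      + ring.
      + lia.
      + nra.
      + lra.
      + assert ((INR k + 1) * (N / INR q) <= INR q * (N / INR q)) by nra.
        replace (INR q * (N / INR q)) with N in H0 by (field; lra). nra. }
  assert (unit : forall q, (1 <= q)%nat -> h (N / INR q) = / INR q).
  { intros q Hq. assert (Hq' : 0 < INR q) by (apply lt_0_INR; lia).
    pose proof (mult q Hq q (le_n q)) as E.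
    replace (INR q * (N / INR q)) with N in E by (field; lra). rewrite H1 in E.
    apply (Rmult_eq_reg_l (INR q)); [|lra]. rewrite <- E. field. lra. }
  intros a [Ha0 HaN].
  destruct (Req_EM_T a N) as [->|HaN']. { rewrite H1. field. lra. }
  destruct (Req_EM_T (h a) (a / N)) as [E|E]; auto. exfalso.
  set (e := Rabs (h a - a / N)). assert (He : 0 < e) by (apply Rabs_pos_lt; lra).
  destruct (nfloor_ex (/ e)) as [n0 [_ Hn0]]. { left. apply Rinv_0_lt_compat; auto. }
  set (q := S n0). assert (Hq : (1 <= q)%nat) by (unfold q; lia).
  assert (Hq' : 0 < INR q) by (apply lt_0_INR; lia).
  assert (HqI : / e < INR q) by (unfold q; rewrite S_INR; lra).
  set (d := N / INR q).
  assert (Hd : 0 < d) by (apply Rdiv_lt_0_compat; auto).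
  destruct (nfloor_ex (INR q * a / N)) as [k [Hk1 Hk2]].
  { apply Rmult_le_pos; [nra|]. left; apply Rinv_0_lt_compat; auto. }
  assert (Hka : INR k * d <= a).
  { apply Rle_trans with ((INR q * a / N) * d). apply Rmult_le_compat_r; lra.
    right. unfold d. field. lra. }
  assert (Hak : a < (INR k + 1) * d).
  { apply Rle_lt_trans with ((INR q * a / N) * d). right. unfold d. field. lra.
    apply Rmult_lt_compat_r; lra. }
  assert (HkqR : INR k < INR q).
  { apply Rle_lt_trans with (INR q * a / N); auto.
    apply (Rmult_lt_reg_r N); auto. unfold Rdiv. rewrite Rmult_assoc, Rinv_l, Rmult_1_r by lra. nra. }
  apply INR_lt in HkqR.
  assert (Hk1q : (S k <= q)%nat) by lia.
  assert (L1 : h (INR k * d) <= h a).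
  { apply mono; auto. pose proof (pos_INR k). nra. }
  assert (L2 : h a <= h (INR (S k) * d)).
  { apply mono; auto. rewrite S_INR; lra.
    apply Rle_trans with (INR q * d). apply Rmult_le_compat_r; [lra|]. apply le_INR; auto.
    right. unfold d. field. lra. }
  pose proof (mult q Hq k ltac:(lia)) as M1. pose proof (mult q Hq (S k) Hk1q) as M2.
  pose proof (unit q Hq) as M3. fold d in M1, M2, M3.
  rewrite M1, M3 in L1. rewrite M2, M3 in L2. rewrite S_INR in L2.
  assert (A1 : INR k * / INR q <= a / N).
  { apply Rmult_le_reg_r with N; auto. replace (a / N * N) with a by (field; lra).
    replace (INR k * / INR q * N) with (INR k * d) by (unfold d; field; lra). auto. }
  assert (A2 : a / N < (INR k + 1) * / INR q).
  { apply Rmult_lt_reg_r with N; auto. replace (a / N * N) with a by (field; lra).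
    replace ((INR k + 1) * / INR q * N) with ((INR k + 1) * d) by (unfold d; field; lra). auto. }
  assert (Hle : e <= / INR q).
  { unfold e. apply Rabs_le. split; nra. }
  assert (e * INR q > 1).
  { apply Rlt_gt. replace 1 with (e * / e) by (field; lra). apply Rmult_lt_compat_l; auto. }
  assert (e * INR q <= / INR q * INR q) by (apply Rmult_le_compat_r; lra).
  rewrite Rinv_l in H0 by lra. lra.
Qed.

Theorem theorem3 (p : vec -> nat -> R) :
  prob_rule p -> axiom_A2 p -> axiom_A3 p ->
  forall v : vec, allowed v ->
  forall n : nat, p v n = sqn v n / Series (sqn v).
Proof.
  intros HP HA2 HA3 v Hv n.
  destruct Hv as [Hl Hpos] eqn:Hvv.
  set (N := Series (sqn v)).
  rewrite (red' p HA3 v n (conj Hl Hpos)). fold N.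
  assert (Hc : 0 <= Cmod (v n) ^ 2 <= N).
  { split. apply pow2_ge_0. apply (term_le_Series (sqn v) n); auto. apply sqn_nonneg. }
  rewrite (cauchy (G p n N) N); auto.
  - intros a Ha. apply (G_nonneg p HP); auto.
  - apply (G_full p HP HA2); auto.
  - intros a b Ha Hb Hab. symmetry. rewrite <- (G_sym p HA2 HA3 (S n) n N b); auto; try lra.
    apply (G_add p HA2 HA3); auto.
Qed.
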